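(* Let $\mathcal{T}$ be an $l$-eligible microdata table, and run Phase One of the algorithm described in the context, obtaining $\dot{Q}_1,\dots,\dot{Q}_s,\dot{R}$. If $\dot{R}$ is $l$-eligible, then $(\dot{Q}_1,\dots,\dot{Q}_s,\dot{R})$ is an optimal solution of the reformulated tuple minimization problem, i.e., $|\dot{R}| = OPT$.
   Context: A microdata table $\mathcal{T}$ is a multiset of $n$ tuples, each with values on $d$ quasi-identifier (QI) attributes and one sensitive attribute (SA). For a multiset $Q$ of tuples and SA value $v$, $h(Q,v)$ is the number of tuples of $Q$ with SA value $v$, $h(Q)=\max_v h(Q,v)$, and the pillars of $Q$ are the SA values $v$ with $h(Q,v)=h(Q)$. $Q$ is $l$-eligible if $|Q|\ge l\cdot h(Q)$. Partition $\mathcal{T}$ into $Q_1,\dots,Q_s$, the maximal classes of tuples having identical values on all QI attributes. Reformulated tuple minimization: choose sub-multisets $Q'_i\subseteq Q_i$ and let $R'=\mathcal{T}\setminus\bigcup_i Q'_i$, such that every $Q'_i$ and $R'$ are $l$-eligible, minimizing $|R'|$; $OPT$ denotes the minimum value. Phase One: start with $R=\emptyset$; for each $i$, while $Q_i$ is not $l$-eligible, move one tuple whose SA value is a pillar of $Q_i$ from $Q_i$ to $R$ (ties arbitrary). $\dot{Q}_1,\dots,\dot{Q}_s,\dot{R}$ denote the resulting multisets. *)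

(* Defs.v *)
From mathcomp Require Import all_boot.
Set Implicit Arguments. Unset Strict Implicit. Unset Printing Implicit Defensive.

Section Microdata.
Variables (QT ST : eqType).
(* a tuple: its QI values (all d attributes packed in QT) and its SA value *)
Definition tup := (QT * ST)%type.

Definition hv (Q : seq tup) (v : ST) : nat := count (fun t => t.2 == v) Q.
(* h(Q) = max_v h(Q,v)  (0 for empty Q) *)
Definition hmax (Q : seq tup) : nat := \max_(t <- Q) hv Q t.2.
Definition pillar (Q : seq tup) (v : ST) : bool := hv Q v == hmax Q.
Definition eligible (l : nat) (Q : seq tup) : bool := l * hmax Q <= size Q.

Definition submset (Q' Q : seq tup) : bool :=
  all (fun x => count_mem x Q' <= count_mem x Q) Q'.

Definition qis (T : seq tup) : seq QT := undup (map fst T).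
Definition classes (T : seq tup) : seq (seq tup) :=
  [seq [seq t <- T | t.1 == q] | q <- qis T].

Definition feasible (l : nat) (T : seq tup) (Q' : seq (seq tup)) (R' : seq tup) : Prop :=
  [/\ size Q' = size (classes T),
      forall i, i < size Q' -> submset (nth [::] Q' i) (nth [::] (classes T) i),
      forall i, i < size Q' -> eligible l (nth [::] Q' i),
      perm_eq T (flatten Q' ++ R')
    & eligible l R'].

(* Phase One on one class: PhaseOneClass l Q Qdot Rpart means that repeatedly
   moving a tuple with pillar SA value out of Q while Q is not l-eligible can
   end with Qdot, the moved tuples being Rpart (any tie-breaking). *)
Inductive PhaseOneClass (l : nat) : seq tup -> seq tup -> seq tup -> Prop :=
| P1_done Q : eligible l Q -> PhaseOneClass l Q Q [::]
| P1_step Q x Qd Rp : ~~ eligible l Q -> x \in Q -> pillar Q x.2 ->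
    PhaseOneClass l (rem x Q) Qd Rp -> PhaseOneClass l Q Qd (x :: Rp).

Definition PhaseOne (l : nat) (T : seq tup) (Qd : seq (seq tup)) (Rd : seq tup) : Prop :=
  exists Rps : seq (seq tup),
    [/\ size Qd = size (classes T), size Rps = size (classes T),
        forall i, i < size (classes T) ->
          PhaseOneClass l (nth [::] (classes T) i) (nth [::] Qd i) (nth [::] Rps i)
      & Rd = flatten Rps].
End Microdata.

(* Main.v *)
Require Import Defs.
From mathcomp Require Import all_boot.
From mathcomp Require Import zify.
Set Implicit Arguments. Unset Strict Implicit. Unset Printing Implicit Defensive.

Lemma cnt_dom (T : eqType) (P Q : seq T) :
  (forall x, count_mem x P <= count_mem x Q) -> forall a, count a P <= count a Q.
Proof.
elim: P Q => [|t P IH] Q H a /=; first by [].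
have tQ : t \in Q.
  by rewrite -has_pred1 has_count; have := H t; rewrite /= eqxx /=; lia.
have pQ := perm_to_rem tQ.
rewrite (permP pQ) /=.
suff: count a P <= count a (rem t Q) by lia.
apply: IH => x; have := H x; rewrite /= (permP pQ) /=; lia.
Qed.

Section S.
Variables (QT ST : eqType).
Implicit Types (P Q Qd Rp : seq (QT * ST)).

Lemma hv_map P v : hv P v = count_mem v (map snd P).
Proof. by rewrite /hv count_map. Qed.

Lemma size_dom P Q : (forall v, hv P v <= hv Q v) -> size P <= size Q.
Proof.
move=> H; rewrite -(size_map snd P) -(size_map snd Q) -!count_predT.
by apply: cnt_dom => x; rewrite -!hv_map.
Qed.

Lemma hv_le_hmax Q v : hv Q v <= hmax Q.
Proof.
case hh: (has (fun t : QT * ST => t.2 == v) Q).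
  case/hasP: hh => t tQ /eqP <-.
  by rewrite /hmax; apply: (@leq_bigmax_seq _ _ xpredT (fun t => hv Q t.2)).
by move/negbT: hh; rewrite has_count -leqNgt leqn0 /hv => /eqP ->.
Qed.

Lemma p1_perm l Q Qd Rp : PhaseOneClass l Q Qd Rp -> perm_eq Q (Qd ++ Rp).
Proof.
elim=> [Q0 _|Q0 x Qd0 Rp0 _ xQ _ _ IH]; first by rewrite cats0.
apply/permP => a.
rewrite (permP (perm_to_rem xQ)) /= (permP IH) !count_cat /=; lia.
Qed.

Lemma p1_elig l Q Qd Rp : PhaseOneClass l Q Qd Rp -> eligible l Qd.
Proof. by elim. Qed.

Lemma p1_opt l Q Qd Rp : PhaseOneClass l Q Qd Rp ->
  forall P, (forall v, hv P v <= hv Q v) -> eligible l P -> size P <= size Qd.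
Proof.
elim=> [Q0 _|Q0 x Qd0 Rp0 nel xQ pil _ IH] P dom elP.
  exact: size_dom.
have pQ := perm_to_rem xQ.
have hrem v : hv Q0 v = (x.2 == v) + hv (rem x Q0) v.
  by rewrite /hv (permP pQ) /=.
case: (ltnP (hv P x.2) (hv Q0 x.2)) => hlt.
  apply: IH => // v; have := dom v; rewrite hrem.
  case: eqP => [<-|] /=; last by lia.
  move: hlt; rewrite hrem eqxx /=; lia.
exfalso.
move: nel elP; rewrite /eligible -(eqP pil) => nel elP.
have h1 := hv_le_hmax P x.2.
have h2 := size_dom dom.
have : l * hv Q0 x.2 <= l * hmax P by apply: leq_mul => //; lia.
move=> hm; move/negP: nel; apply.
by apply: leq_trans hm (leq_trans elP h2).
Qed.

Lemma classes_perm (s : seq QT) (T : seq (QT * ST)) :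
  uniq s -> all (fun t : QT * ST => t.1 \in s) T ->
  perm_eq T (flatten [seq [seq t <- T | t.1 == q] | q <- s]).
Proof.
elim: s T => [|q s IH] T /=.
  by move=> _; case: T => //= t T; rewrite in_nil.
case/andP => qs us aT.
rewrite -(perm_filterC (fun t : QT * ST => t.1 == q) T).
rewrite perm_cat2l.
have -> : [seq [seq t <- T | t.1 == q0] | q0 <- s] =
          [seq [seq t <- [seq t <- T | predC (fun t : QT * ST => t.1 == q) t] | t.1 == q0] | q0 <- s].
  apply/eq_in_map => q0 q0s; rewrite -filter_predI; apply: eq_filter => t /=.
  case: eqP => // ->; case: eqP => // e; by move: qs; rewrite -e q0s.
apply: IH => //; apply/allP => t; rewrite mem_filter => /andP [/= nq tT].
by move/allP: aT => /(_ t tT); rewrite in_cons (negbTE nq).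
Qed.

Lemma flatten_perm (A B C : seq (seq (QT * ST))) :
  size B = size A -> size C = size A ->
  (forall i, i < size A -> perm_eq (nth [::] A i) (nth [::] B i ++ nth [::] C i)) ->
  perm_eq (flatten A) (flatten B ++ flatten C).
Proof.
elim: A B C => [|a A IH] [|b B] [|c C] //= [eB] [eC] H.
apply/permP => p.
have h0 := permP (H 0 isT) p.
have h1 := permP (IH B C eB eC (fun i hi => H i.+1 hi)) p.
move: h0 h1; rewrite /= !count_cat; lia.
Qed.

Lemma flatten_size (A B : seq (seq (QT * ST))) :
  size A = size B -> (forall i, i < size A -> size (nth [::] A i) <= size (nth [::] B i)) ->
  size (flatten A) <= size (flatten B).
Proof.
elim: A B => [|a A IH] [|b B] //= [e] H.
rewrite !size_cat; apply: leq_add; first exact: (H 0).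
exact: (IH B e (fun i hi => H i.+1 hi)).
Qed.

End S.

Theorem corollary1 (QT ST : eqType) (l : nat) (T : seq (QT * ST))
    (Qd : seq (seq (QT * ST))) (Rd : seq (QT * ST)) :
  eligible l T ->
  PhaseOne l T Qd Rd ->
  eligible l Rd ->
  feasible l T Qd Rd /\
  (forall (Q' : seq (seq (QT * ST))) (R' : seq (QT * ST)),
      feasible l T Q' R' -> size Rd <= size R').
Proof.
move=> _ [Rps [eQd eRps Hp ->]] elR.
have Tperm : perm_eq T (flatten (classes T)).
  apply: classes_perm; first exact: undup_uniq.
  by apply/allP => t tT; rewrite mem_undup; apply: map_f.
have Tperm2 : perm_eq T (flatten Qd ++ flatten Rps).
  apply: perm_trans Tperm _; apply: flatten_perm => // i hi.
  exact: p1_perm (Hp i hi).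
split.
  split => // i hi.
    rewrite eQd in hi; have := p1_perm (Hp i hi) => pe.
    apply/allP => x _; rewrite (permP pe) count_cat; exact: leq_addr.
  by rewrite eQd in hi; exact: p1_elig (Hp i hi).
move=> Q' R' [sQ' subQ elQ pT _].
have s1 := perm_size pT; have s2 := perm_size Tperm2.
rewrite size_cat in s1; rewrite size_cat in s2.
suff h : size (flatten Q') <= size (flatten Qd).
  by rewrite -(leq_add2l (size (flatten Qd))) -s2 s1 leq_add2r.
apply: flatten_size; first by rewrite sQ' eQd.
move=> i hi; rewrite sQ' in hi.
apply: p1_opt (Hp i hi) _ _ _; last by apply: elQ; rewrite sQ'.
move=> v; rewrite /hv.
apply: cnt_dom => x.
have := subQ i ltac:(by rewrite sQ').
move/allP => /(_ x).
case xin: (x \in nth [::] Q' i); first by move/(_ isT).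
move=> _; move/negbT: xin; rewrite -has_pred1 has_count -leqNgt leqn0 => /eqP.
by move=> ->.
Qed.
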